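(* Let $\{r_k\}_{k\ge1}$ be a sequence in $\mathbb R^N$ and let $\{a_k\}_{k\ge1}\subset(0,1)$ satisfy $\sum_{k=1}^{+\infty}a_k=+\infty$. Assume that $F_{k+1}:=r_{k+1}+\sum_{j=1}^k a_jr_j$ has a finite limit in $\mathbb R^N$ as $k\to+\infty$. Then $\lim_{k\to+\infty}\|r_k\|=0$. *)

(* Defs.v *)
From HB Require Import structures.
From mathcomp Require Import all_boot all_order all_algebra.
From mathcomp Require Import all_classical all_reals all_analysis.
Set Implicit Arguments. Unset Strict Implicit. Unset Printing Implicit Defensive.
Import Order.TTheory GRing.Theory Num.Theory.
Local Open Scope ring_scope.

Definition eucl_norm (R : realType) (N : nat) (v : 'rV[R]_N) : R :=
  Num.sqrt (\sum_(i < N) v ord0 i ^+ 2).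

(* Main.v *)
Require Import Defs.
From HB Require Import structures.
From mathcomp Require Import all_boot all_order all_algebra.
From mathcomp Require Import all_classical all_reals all_analysis.
From mathcomp Require Import ring lra zify.
Import Order.TTheory GRing.Theory Num.Theory.
Import numFieldNormedType.Exports.
Local Open Scope classical_set_scope.
Local Open Scope ring_scope.

Lemma nearE (P : nat -> Prop) : (\forall n \near \oo, P n) <-> exists N, forall n, (N <= n)%N -> P n.
Proof. split. case => N _ H. exists N. done. case=> N H; exists N => //. Qed.

Lemma eucl_bound (R : realType) N (v : 'rV[R]_N) : eucl_norm v <= (N.+1)%:R * `|v|.
Proof.
have hc : forall i, `|v ord0 i| <= `|v|.
  move=> i; rewrite (_ : `|v| = mx_norm v) // mx_normrE.
  exact: (le_bigmax _ (fun ij : 'I_1 * 'I_N => `|v ij.1 ij.2|) (ord0, i)).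
have m0 : 0 <= `|v| by [].
rewrite /eucl_norm -(ger0_norm (_ : 0 <= N.+1%:R * `|v|)); last by rewrite mulr_ge0.
rewrite -sqrtr_sqr ler_sqrt; last exact: sqr_ge0.
apply: (le_trans (y := \sum_(i < N) `|v|^+2)).
  apply: ler_sum => i _; rewrite -real_normK ?num_real //.
  by apply: lerXn2r; rewrite ?nnegrE ?normr_ge0 ?hc.
rewrite sumr_const card_ord exprMn.
rewrite -mulr_natr mulrC.
idtac.
rewrite -[_ *+ N]mulr_natr mul1r -natrX; apply: ler_wpM2l; rewrite ?sqr_ge0 // ler_nat; lia.
Qed.
Lemma scal_rec (R : realType) (d b f T : nat -> R) (eps : R) (K : nat)
  (heps : 0 < eps)
  (hb : forall k, 0 < b k < 1)
  (hd : forall k, d k.+1 <= (1 - b k) * d k + b k * f k)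
  (hT : forall k, T k.+1 = T k + b k)
  (hTinf : forall A, exists M, forall n, (M <= n)%N -> A <= T n)
  (hf : forall k, (K <= k)%N -> f k <= eps) :
  exists M, forall n, (M <= n)%N -> d n <= eps + eps.
Proof.
pose e k := Num.max (d k - eps) 0.
have e0 : forall k, 0 <= e k by move=> k; rewrite le_max lexx orbT.
have de : forall k, d k <= e k + eps by move=> k; rewrite -lerBlDr le_max lexx.
have he : forall k, (K <= k)%N -> e k.+1 <= (1 - b k) * e k.
  move=> k Kk; rewrite ge_max; apply/andP; split; last first.
    by apply: mulr_ge0 => //; have := hb k; move=> /andP[]; lra.
  have := hd k; have := hf k Kk; have := hb k; move=> /andP[b0 b1].
  have := de k; have := e0 k => E0 Dk fk dk.
  nra.
have hg : forall n, 0 <= T ((K + n)%N) - T K /\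
    e ((K + n)%N) * (1 + (T ((K + n)%N) - T K)) <= e K.
  elim=> [|n [t0 IH]]; first by rewrite addn0; split; [rewrite subrr|rewrite subrr addr0 mulr1].
  rewrite addnS hT; have := hb ((K + n)%N); move=> /andP[b0 b1].
  have := he ((K + n)%N) (leq_addr _ _); have := e0 ((K + n)%N); have := e0 ((K + n)%N).+1.
  move=> E1 E0 hE; split; first lra.
  set t := T ((K + n)%N) - T K in t0 IH *.
  have -> : T ((K + n)%N) + b ((K + n)%N) - T K = t + b ((K + n)%N) by rewrite /t; lra.
  have h1 : e ((K + n)%N.+1) * (1 + (t + b (K + n)%N)) <= (1 - b (K + n)%N) * e (K + n)%N * (1 + (t + b (K + n)%N)).
    by apply: ler_wpM2r => //; lra.
  have h2 : 0 <= b (K + n)%N * e (K + n)%N * (t + b (K + n)%N) by apply: mulr_ge0; [apply: mulr_ge0|]; lra.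
  nra.
have [M HM] := hTinf (T K + e K / eps + 1).
exists (maxn K M) => n; rewrite geq_max => /andP[Kn Mn].
have := HM n Mn; have [_] := hg (n - K)%N; rewrite subnKC //.
set t := T n - T K => hgn hTn.
have hc : e K = (e K / eps) * eps by rewrite mulfVK // gt_eqF.
set c := e K / eps in hc hTn.
have := e0 n; have := de n; move=> dn en.
suff : e n <= eps by lra.
have ht : c + 1 <= t by rewrite /t; lra.
have hc0 : 0 <= c by rewrite /c divr_ge0 // ltW.
rewrite leNgt; apply/negP => H.
have h3 : 0 < (e n - eps) * (1 + t) by apply: mulr_gt0; lra.
have h4 : 0 <= eps * (t - c - 1) by apply: mulr_ge0; lra.
nra.
Qed.

Theorem lemmaA5 (R : realType) (N : nat) (r : nat -> 'rV[R]_N) (a : nat -> R)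
  (ha : forall k, (1 <= k)%N -> 0 < a k < 1)
  (hsum : (fun n => \sum_(1 <= k < n.+1) a k) @ \oo --> +oo)
  (hF : exists l : 'rV[R]_N,
      (fun k => r k.+1 + \sum_(1 <= j < k.+1) a j *: r j) @ \oo --> l) :
  (fun k => eucl_norm (r k)) @ \oo --> 0.
Proof.
case: hF => l hl.
set S := fun k => \sum_(1 <= j < k.+1) a j *: r j.
set F := fun k => r k.+1 + S k.
pose D k := S k - l.
have hSS : forall k, S k.+1 = S k + a k.+1 *: r k.+1.
  by move=> k; rewrite /S big_nat_recr.
have rec : forall k, D k.+1 = (1 - a k.+1) *: D k + a k.+1 *: (F k - l).
  move=> k; rewrite /D /F hSS scalerBl scale1r -addrA (addrC (r k.+1)) -addrA.
  by rewrite (addrAC (S k) (r k.+1)) [a k.+1 *: (_ + r k.+1)]scalerDr addKr addrA addrAC.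
have hd : forall k, `|D k.+1| <= (1 - a k.+1) * `|D k| + a k.+1 * `|F k - l|.
  move=> k; rewrite rec; have := ha k.+1 isT => /andP[a0 a1].
  apply: (le_trans (ler_normD _ _)).
  rewrite !normrZ !ger0_norm //; lra.
have hT : forall k, (\sum_(1 <= j < k.+2) a j) = \sum_(1 <= j < k.+1) a j + a k.+1.
  by move=> k; rewrite big_nat_recr.
have hTinf : forall A, exists M, forall n, (M <= n)%N -> A <= \sum_(1 <= j < n.+1) a j.
  by move=> A; apply/nearE; move/cvgryPge : hsum; apply.
have hf : forall eps, 0 < eps -> exists K, forall k, (K <= k)%N -> `|F k - l| <= eps.
  move=> eps e0; apply/nearE; move/cvgrPdist_le : hl => /(_ eps e0).
  by apply: filterS => k; rewrite distrC.
apply/cvgrPdist_le => eps e0; apply/nearE.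
pose c : R := N.+1%:R.
have c0 : 0 < c by rewrite /c ltr0n.
pose d := eps / (3 * c).
have d0 : 0 < d by rewrite /d divr_gt0 // mulr_gt0.
have [K hK] := hf d d0.
have [M hM] := @scal_rec R (fun k => `|D k|) (fun k => a k.+1)
  (fun k => `|F k - l|) (fun n => \sum_(1 <= j < n.+1) a j) d K d0
  (fun k => ha k.+1 isT) hd hT hTinf hK.
exists (maxn K M).+1 => -[|n] //; rewrite ltnS geq_max => /andP[Kn Mn].
rewrite sub0r normrN ger0_norm ?sqrtr_ge0 //.
have hr : r n.+1 = (F n - l) - D n by rewrite /D /F; rewrite opprB addrA subrK addrK.
apply: le_trans (eucl_bound _ _ (r n.+1)) _; rewrite -/c.
have : `|r n.+1| <= d + (d + d).
  rewrite hr; apply: (le_trans (ler_normB _ _)); apply: lerD; [exact: hK|exact: hM].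
have -> : eps = c * (d + (d + d)).
  by rewrite /d; field; rewrite gt_eqF.
move=> h; apply: ler_wpM2l => //; exact: ltW.
Qed.
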